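(* Let $M$ be a monoid, $\phi:M\to M$ an endomorphism, and $z\in M$ such that the elements $z\phi^n$ ($n\in\mathbb{N}\cup\{0\}$) are pairwise distinct. Let $\beta,\beta',\delta,\delta'\in\mathbb{N}\cup\{0\}$. Then there exist $\alpha,\alpha',\gamma,\gamma'\in\mathbb{N}\cup\{0\}$ such that $c^\gamma b^\beta z c^\delta b^\alpha = c^{\gamma'} b^{\beta'} z c^{\delta'} b^{\alpha'}$ in $\mathrm{BR}(M,\phi)$ if and only if $\max\{\beta,\delta\}=\max\{\beta',\delta'\}$.
   Context: If $M$ has monoid presentation $\langle A\mid \mathcal{R}\rangle$ ($A$ possibly infinite) and $\phi$ is an endomorphism of $M$ (maps written on the right), the Bruck--Reilly extension $\mathrm{BR}(M,\phi)$ is the monoid presented by $\langle A,b,c\mid \mathcal{R},\ bc=1,\ ba=(a\phi)b,\ ac=c(a\phi)\ (a\in A)\rangle$ (with $a\phi$ written as a word over $A$); it does not depend on the choice of presentation, and $M$ embeds in it. *)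

(* Defs.v *)
From Stdlib Require Import List Arith.
Import ListNotations.

Section BR.
Variables (T : Type) (mul : T -> T -> T) (one : T) (phi : T -> T).

Definition is_monoid : Prop :=
  (forall x y w, mul x (mul y w) = mul (mul x y) w) /\
  (forall x, mul one x = x) /\ (forall x, mul x one = x).

Definition is_monoid_endo : Prop :=
  (forall x y, phi (mul x y) = mul (phi x) (phi y)) /\ phi one = one.

(* Generators of BR(M,phi) w.r.t. the presentation <A | R> of M with A = M
   and R the multiplication table:  letters a (a in M), b, c. *)
Inductive br_letter : Type :=
| Lm : T -> br_letter
| Lb : br_letter
| Lc : br_letter.

Inductive br_rel : list br_letter -> list br_letter -> Prop :=
| rel_mul : forall x y, br_rel [Lm x; Lm y] [Lm (mul x y)]
| rel_one : br_rel [Lm one] []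
| rel_bc : br_rel [Lb; Lc] []
| rel_ba : forall a, br_rel [Lb; Lm a] [Lm (phi a); Lb]
| rel_ac : forall a, br_rel [Lm a; Lc] [Lc; Lm (phi a)].

(* The congruence on the free monoid generated by the relations;
   equality in BR(M,phi) of the elements represented by two words. *)
Inductive br_eq : list br_letter -> list br_letter -> Prop :=
| br_step : forall u v l r, br_rel l r -> br_eq (u ++ l ++ v) (u ++ r ++ v)
| br_refl : forall w, br_eq w w
| br_sym : forall w1 w2, br_eq w1 w2 -> br_eq w2 w1
| br_trans : forall w1 w2 w3, br_eq w1 w2 -> br_eq w2 w3 -> br_eq w1 w3.

Definition br_word (z : T) (g be d a : nat) : list br_letter :=
  repeat Lc g ++ repeat Lb be ++ [Lm z] ++ repeat Lc d ++ repeat Lb a.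

End BR.

Arguments Lm {T}. Arguments Lb {T}. Arguments Lc {T}.

(* Main.v *)
Require Import Defs.
From Stdlib Require Import List Arith Lia.
Import ListNotations.

Lemma iter_comm {A} (f : A -> A) : forall k a, Nat.iter k f (f a) = f (Nat.iter k f a).
Proof. induction k; intros; simpl; auto. rewrite IHk; auto. Qed.

Definition bact {T} (mul : T -> T -> T) (phi : T -> T) (x : br_letter T)
  (s : nat * T * nat) : nat * T * nat :=
  match s with (i, m, j) =>
  match x with
  | Lc => (S i, m, j)
  | Lb => match i with 0 => (0, phi m, S j) | S i' => (i', m, j) end
  | Lm a => (i, mul (Nat.iter i phi a) m, j)
  end end.

Lemma iter_hom T mul one phi (HM : is_monoid T mul one) (Hphi : is_monoid_endo T mul one phi) :
  forall n x y, Nat.iter n phi (mul x y) = mul (Nat.iter n phi x) (Nat.iter n phi y).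
Proof.
  destruct Hphi as [H1 H2]. induction n; intros; simpl; auto. rewrite IHn; auto.
Qed.

Lemma iter_one T mul one phi (Hphi : is_monoid_endo T mul one phi) :
  forall n, Nat.iter n phi one = one.
Proof.
  destruct Hphi as [H1 H2]. induction n; simpl; auto. rewrite IHn; auto.
Qed.

Lemma rel_ok T mul one phi (HM : is_monoid T mul one) (Hphi : is_monoid_endo T mul one phi) :
  forall l r, br_rel T mul one phi l r -> forall s,
   fold_right (bact mul phi) s l = fold_right (bact mul phi) s r.
Proof.
  destruct HM as [HA [HL HR]].
  intros l r H [[i m] j]; destruct H; simpl.
  - rewrite (iter_hom T mul one phi); [rewrite HA; reflexivity|repeat split; auto|auto].

  - rewrite (iter_one T mul one phi) by auto. rewrite HL; auto.
  - reflexivity.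
  - destruct i; simpl.
    + destruct Hphi as [H1 _]. rewrite H1; auto.
    + rewrite <- (iter_comm phi i a). reflexivity.
  - rewrite <- (iter_comm phi i a). reflexivity.
Qed.

Lemma eq_ev T mul one phi (HM : is_monoid T mul one) (Hphi : is_monoid_endo T mul one phi) :
  forall w1 w2, br_eq T mul one phi w1 w2 ->
   fold_right (bact mul phi) (0, one, 0) w1 = fold_right (bact mul phi) (0, one, 0) w2.
Proof.
  intros w1 w2 H; induction H.
  - rewrite !fold_right_app. f_equal. apply (rel_ok T mul one phi); auto.
  - reflexivity.
  - congruence.
  - congruence.
Qed.

Lemma c_state T mul (phi : T -> T) : forall k i m j,
  fold_right (bact mul phi) (i, m, j) (repeat Lc k) = (i + k, m, j).
Proof.
  induction k; intros; simpl. f_equal; f_equal; lia.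
  rewrite IHk. simpl. f_equal; f_equal; lia.
Qed.

Lemma b_state T mul (phi : T -> T) : forall k i m j, exists j',
  fold_right (bact mul phi) (i, m, j) (repeat Lb k) = (i - k, Nat.iter (k - i) phi m, j').
Proof.
  induction k; intros; cbn [repeat fold_right].
  - exists j. rewrite Nat.sub_0_r. reflexivity.
  - destruct (IHk i m j) as [j' E]. rewrite E. cbn [bact fold_right].
    destruct (i - k) eqn:Hd.
    + exists (S j'). replace (S k - i) with (S (k - i)) by lia. f_equal; try (f_equal; try lia).
    + exists j'. replace (S k - i) with 0 by lia. replace (k - i) with 0 by lia.
      f_equal; try (f_equal; try lia).
Qed.

Lemma ev_word T mul one phi (HM : is_monoid T mul one) (Hphi : is_monoid_endo T mul one phi) z :
  forall g be d a, exists i j,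
   fold_right (bact mul phi) (0, one, 0) (br_word T z g be d a)
   = (i, Nat.iter (Nat.max be d) phi z, j).
Proof.
  destruct HM as [HA [HL HR]].
  intros. unfold br_word. rewrite !fold_right_app.
  destruct (b_state T mul phi a 0 one 0) as [j1 E1]. rewrite E1.
  rewrite (iter_one T mul one phi) by auto. rewrite c_state. cbn [bact fold_right]. rewrite HR.
  destruct (b_state T mul phi be (0 - a + d) (Nat.iter (0 - a + d) phi z) j1) as [j2 E2].
  rewrite E2, c_state. eexists; eexists. f_equal. f_equal.
  rewrite <- Nat.iter_add. f_equal. lia.
Qed.

Lemma cong T mul one phi : forall u v, br_eq T mul one phi u v ->
  forall p q A B, A = p ++ u ++ q -> B = p ++ v ++ q -> br_eq T mul one phi A B.
Proof.
  intros u v H; induction H; intros p q A B -> ->.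
  - replace (p ++ (u ++ l ++ v) ++ q) with ((p ++ u) ++ l ++ (v ++ q)) by (rewrite !app_assoc; reflexivity).
    replace (p ++ (u ++ r ++ v) ++ q) with ((p ++ u) ++ r ++ (v ++ q)) by (rewrite !app_assoc; reflexivity).
    apply br_step; auto.
  - apply br_refl.
  - apply br_sym. eauto.
  - eapply br_trans; eauto.
Qed.


Lemma L1 T mul one phi : forall k a,
  br_eq T mul one phi (repeat Lb k ++ [Lm a]) ([Lm (Nat.iter k phi a)] ++ repeat Lb k).
Proof.
  induction k; intros; simpl. apply br_refl.
  eapply br_trans. eapply (cong _ _ _ _ _ _ (IHk a) [Lb] []); simpl; rewrite ?app_nil_r; reflexivity.
  eapply (cong _ _ _ _ _ _ (br_step T mul one phi [] [] _ _ (rel_ba _ _ _ _ (Nat.iter k phi a))) [] (repeat Lb k)); reflexivity.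
Qed.

Lemma L2 T mul one phi : forall k a,
  br_eq T mul one phi ([Lm a] ++ repeat Lc k) (repeat Lc k ++ [Lm (Nat.iter k phi a)]).
Proof.
  induction k; intros; simpl. apply br_refl.
  eapply br_trans.
  eapply (cong _ _ _ _ _ _ (br_step T mul one phi [] [] _ _ (rel_ac _ _ _ _ a)) [] (repeat Lc k)); reflexivity.
  eapply (cong _ _ _ _ _ _ (IHk (phi a)) [Lc] []); simpl; rewrite ?app_nil_r; try reflexivity.
  rewrite iter_comm; reflexivity.
Qed.

Lemma repeat_S_r {A} (x : A) k : repeat x (S k) = repeat x k ++ [x].
Proof. replace (S k) with (k + 1) by lia. rewrite repeat_app. reflexivity. Qed.

Lemma L3 T mul one phi : forall k,
  br_eq T mul one phi (repeat Lb k ++ repeat Lc k) [].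
Proof.
  induction k. apply br_refl.
  eapply br_trans. 2: exact IHk.
  eapply (cong _ _ _ _ _ _ (br_step T mul one phi [] [] _ _ (rel_bc _ _ _ _)) (repeat Lb k) (repeat Lc k)).
  - rewrite repeat_S_r. simpl. rewrite <- app_assoc. reflexivity.
  - reflexivity.
Qed.

Ltac leq := repeat rewrite <- app_assoc; simpl; try reflexivity.

Lemma key T mul one phi z be d :
  br_eq T mul one phi (br_word T z be be d d)
    (repeat Lc (Nat.max be d) ++ [Lm (Nat.iter (Nat.max be d) phi z)] ++ repeat Lb (Nat.max be d)).
Proof.
  unfold br_word.
  eapply br_trans.
  { eapply (cong _ _ _ _ _ _ (L1 T mul one phi be z) (repeat Lc be) (repeat Lc d ++ repeat Lb d)); leq. }
  destruct (le_lt_dec d be) as [Hle|Hlt].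
  - replace (Nat.max be d) with be by lia.
    assert (Eb : repeat (@Lb T) be = repeat Lb (be-d) ++ repeat Lb d).
    { rewrite <- repeat_app. f_equal. lia. }
    eapply (cong _ _ _ _ _ _ (L3 T mul one phi d) (repeat Lc be ++ [Lm (Nat.iter be phi z)] ++ repeat Lb (be - d)) (repeat Lb d)); rewrite Eb; leq.
  - replace (Nat.max be d) with d by lia.
    assert (Ec : repeat (@Lc T) d = repeat Lc be ++ repeat Lc (d - be)).
    { rewrite <- repeat_app. f_equal. lia. }
    eapply br_trans.
    { eapply (cong _ _ _ _ _ _ (L3 T mul one phi be) (repeat Lc be ++ [Lm (Nat.iter be phi z)]) (repeat Lc (d - be) ++ repeat Lb d)); try rewrite Ec; leq. }
    eapply (cong _ _ _ _ _ _ (L2 T mul one phi (d - be) (Nat.iter be phi z)) (repeat Lc be) (repeat Lb d)); try rewrite Ec; leq.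
    rewrite <- Nat.iter_add. replace (d - be + be) with d by lia. reflexivity.
Qed.

Theorem mainTheorem14 (T : Type) (mul : T -> T -> T) (one : T) (phi : T -> T)
  (HM : is_monoid T mul one) (Hphi : is_monoid_endo T mul one phi)
  (z : T) (Hz : forall m n : nat, Nat.iter m phi z = Nat.iter n phi z -> m = n)
  (beta beta' delta delta' : nat) :
  (exists alpha alpha' gamma gamma' : nat,
     br_eq T mul one phi (br_word T z gamma beta delta alpha)
                       (br_word T z gamma' beta' delta' alpha'))
  <-> Nat.max beta delta = Nat.max beta' delta'.
Proof.
  split.
  - intros (a & a' & g & g' & H).
    apply (eq_ev T mul one phi HM Hphi) in H.
    destruct (ev_word T mul one phi HM Hphi z g beta delta a) as (i & j & E).
    destruct (ev_word T mul one phi HM Hphi z g' beta' delta' a') as (i' & j' & E').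
    rewrite E, E' in H. injection H as _ Hm _. apply Hz; exact Hm.
  - intros Ht. exists delta, delta', beta, beta'.
    eapply br_trans. apply key. rewrite Ht. apply br_sym. apply key.
Qed.
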